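(* Under the setting in the context, for every $\pi\in\Pi_\rho$, $$\sup_{r\in\mathcal U^{(1)}_\varepsilon}\Big[\sup_{\beta\in\Pi_\rho}J_r(\beta)-J_r(\pi)\Big]=\sup_{\beta\in\Pi_\rho}\Big\{J_{\hat r}(\beta)-J_{\hat r}(\pi)+\varepsilon\,C_{\infty,\mathrm{rel}}(\beta,\pi;\mu,\mathcal D)\Big\}.$$
   Context: Setting: prompts $x\sim\mathcal D$ on a space $\mathcal X$; a finite response set $\mathcal Y$; reward functions $r:\mathcal X\times\mathcal Y\to\mathbb R$ (measurable, with the expectations below finite), $r(x)\in\mathbb R^{\mathcal Y}$ the promptwise vector; $\hat r$ a fixed proxy reward. $\Pi_\rho$ is a nonempty set of policies (a local policy class); each $\pi\in\Pi_\rho$ has a bounded measurable linear representation $z_\pi(x)\in\mathbb R^{\mathcal Y}$ (e.g. $z_\pi(x)=\pi(\cdot\mid x)$) with $J_r(\pi)=\mathbb E_{x\sim\mathcal D}[\langle z_\pi(x),r(x)\rangle]$. For each $x$, $\mu_x$ is a probability distribution on $\mathcal Y$ with $\mu_x(y)>0$ for all $y$. Weighted norms: $\|e\|_{1,\mu_x}:=\sum_y\mu_x(y)|e(y)|$, $\|v\|_{\infty,\mu_x^{-1}}:=\max_y|v(y)|/\mu_x(y)$. For $\varepsilon>0$, $\mathcal U^{(1)}_\varepsilon:=\{r:\ \mathbb E_{x\sim\mathcal D}[\|r(x)-\hat r(x)\|_{1,\mu_x}]\le\varepsilon\}$. Relative integrated concentrability: $C_{\infty,\mathrm{rel}}(\beta,\pi;\mu,\mathcal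 D):=\operatorname{ess\,sup}_{x\sim\mathcal D}\|z_\beta(x)-z_\pi(x)\|_{\infty,\mu_x^{-1}}$. *)

(* Defs.v *)
From HB Require Import structures.
From mathcomp Require Import all_boot all_order all_algebra.
From mathcomp Require Import all_classical all_reals all_analysis.
From mathcomp Require Import ess_sup_inf.
Set Implicit Arguments. Unset Strict Implicit. Unset Printing Implicit Defensive.
Import Order.TTheory GRing.Theory Num.Def Num.Theory.
Import numFieldNormedType.Exports.
Local Open Scope classical_set_scope.
Local Open Scope ring_scope.

Section defs.
Context {d : measure_display} {X : measurableType d} {R : realType} {Y : finType}.

Definition inner (v w : Y -> R) : R := \sum_(y : Y) v y * w y.

Definition norm1w (m : Y -> R) (e : Y -> R) : R := \sum_(y : Y) m y * `|e y|.

(* ||v||_{oo,mu^{-1}} = max_y |v(y)| / mu(y)  (values are >= 0, so 0 is a neutral start) *)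
Definition norminfw (m : Y -> R) (v : Y -> R) : R :=
  \big[Num.max/0]_(y : Y) (`|v y| / m y).

Definition J (P : probability X R) (z : X -> Y -> R) (r : X -> Y -> R) : \bar R :=
  (\int[P]_x (inner (z x) (r x))%:E)%E.

Definition weight_family (mu : X -> Y -> R) : Prop :=
  (forall x y, 0 < mu x y) /\ (forall x, \sum_(y : Y) mu x y = 1) /\
  (forall y, measurable_fun [set: X] (fun x => mu x y)).

Definition policy_rep (z : X -> Y -> R) : Prop :=
  (exists M : R, forall x y, `|z x y| <= M) /\
  (forall y, measurable_fun [set: X] (fun x => z x y)).

Definition reward_fun (P : probability X R) (Pol : Type) (Pi : set Pol)
    (z : Pol -> X -> Y -> R) (mu : X -> Y -> R) (rhat r : X -> Y -> R) : Prop :=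
  (forall y, measurable_fun [set: X] (fun x => r x y)) /\
  (forall b, Pi b -> P.-integrable [set: X] (fun x => (inner (z b x) (r x))%:E)) /\
  P.-integrable [set: X] (fun x => (norm1w (mu x) (fun y => r x y - rhat x y))%:E).

Definition U1 (P : probability X R) (Pol : Type) (Pi : set Pol)
    (z : Pol -> X -> Y -> R) (mu : X -> Y -> R) (rhat : X -> Y -> R) (eps : R)
    : set (X -> Y -> R) :=
  [set r | reward_fun P Pi z mu rhat r /\
     (\int[P]_x (norm1w (mu x) (fun y => r x y - rhat x y))%:E <= eps%:E)%E].

Definition Crel (P : probability X R) (mu : X -> Y -> R) (zb zp : X -> Y -> R) : \bar R :=
  ess_sup P (fun x => (norminfw (mu x) (fun y => zb x y - zp x y))%:E).

End defs.

(* Main.v *)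
Require Import Defs.
From HB Require Import structures.
From mathcomp Require Import all_boot all_order all_algebra.
From mathcomp Require Import all_classical all_reals all_analysis.
From mathcomp Require Import ess_sup_inf measurable_realfun.
From mathcomp Require Import ring lra.
Import Order.TTheory GRing.Theory Num.Def Num.Theory.
Import numFieldNormedType.Exports.
Local Open Scope classical_set_scope.
Local Open Scope ring_scope.

Section alg.
Context {R : realType} {Y : finType}.

Lemma norminfw_ge0 (m v : Y -> R) : (forall y, 0 < m y) -> 0 <= norminfw m v.
Proof.
move=> hm.
rewrite /norminfw; elim/big_ind: _ => //= [a b ha hb|y _].
  by rewrite le_max ha.
by rewrite divr_ge0 // ltW.
Qed.

Lemma norm1w_ge0 (m v : Y -> R) : (forall y, 0 < m y) -> 0 <= norm1w m v.
Proof.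
move=> hm; rewrite /norm1w; apply: sumr_ge0 => y _.
by rewrite mulr_ge0 // ltW.
Qed.

Lemma inner_bound (m v e : Y -> R) : (forall y, 0 < m y) ->
  `|inner v e| <= norminfw m v * norm1w m e.
Proof.
move=> hm; rewrite /inner /norm1w mulr_sumr.
apply: (le_trans (ler_norm_sum _ _ _)); apply: ler_sum => y _.
have my0 := hm y.
have h1 : `|v y| / m y <= norminfw m v.
  by rewrite /norminfw; exact: (le_bigmax (0:R) (fun y => `|v y| / m y) y).
rewrite normrM mulrA.
have -> : `|v y| = `|v y| / m y * m y by rewrite divfK // gt_eqF.
apply: ler_wpM2r => //; apply: ler_wpM2r => //; exact: ltW.
Qed.

Lemma inner_decomp (a b r rh : Y -> R) :
  inner a r - inner b r =
  inner a rh - inner b rh + inner (fun y => a y - b y) (fun y => r y - rh y).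
Proof.
rewrite /inner -!sumrB -big_split /=; apply: eq_bigr => y _.
by rewrite mulrBl !mulrBr; ring.
Qed.

Definition sgnb (s : bool) : R := if s then 1 else -1.

Lemma norm_sgnb s : `|sgnb s| = 1.
Proof. by case: s; rewrite /sgnb ?normrN normr1. Qed.

Lemma inner_single (w : Y -> R) (y0 : Y) (g : R) :
  inner w (fun y => if y == y0 then g else 0) = w y0 * g.
Proof.
rewrite /inner (bigD1 y0) //= eqxx big1 ?addr0 // => y /negbTE ->.
by rewrite mulr0.
Qed.

Lemma norm1w_single (m : Y -> R) (y0 : Y) (g : R) :
  norm1w m (fun y => if y == y0 then g else 0) = m y0 * `|g|.
Proof.
rewrite /norm1w (bigD1 y0) //= eqxx big1 ?addr0 // => y /negbTE ->.
by rewrite normr0 mulr0.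
Qed.

Lemma inner_add (w u t : Y -> R) :
  inner w (fun y => u y + t y) = inner w u + inner w t.
Proof. by rewrite /inner -big_split /=; apply: eq_bigr => y _; rewrite mulrDr. Qed.

Lemma aux1 (k zz l e : R) : k + (zz - e) <= l -> k + zz <= l + e.
Proof. move=> H; lra. Qed.

Lemma aux2 (k l : R) : ~ (k + (l - k + 1) <= l).
Proof. move=> H; lra. Qed.

End alg.

Section main.
Local Open Scope ereal_scope.
Context (d : measure_display) (X : measurableType d) (R : realType)
  (Y : finType) (P : probability X R) (Pol : Type) (Pi : set Pol)
  (z : Pol -> X -> Y -> R) (mu : X -> Y -> R) (rhat : X -> Y -> R) (eps : R).
Context (hz : forall b, Pi b -> policy_rep (z b)) (hmu : weight_family mu)
  (hrhat : reward_fun P Pi z mu rhat rhat) (heps : (0 < eps)%R)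
  (pi : Pol) (hpi : Pi pi).

Definition wf (r : X -> Y -> R) (b : Pol) (x : X) : R :=
  inner (fun y => (z b x y - z pi x y)%R) (fun y => (r x y - rhat x y)%R).

Lemma int_inner {r b} : reward_fun P Pi z mu rhat r -> Pi b ->
  P.-integrable setT (fun x => (inner (z b x) (r x))%:E).
Proof. by move=> [_ [h _]] hb; exact: h. Qed.

Lemma J_fin {r b} : reward_fun P Pi z mu rhat r -> Pi b -> J P (z b) r \is a fin_num.
Proof. by move=> hr hb; apply: integrable_fin_num => //; exact: int_inner. Qed.

Lemma w_int {r b} : reward_fun P Pi z mu rhat r -> Pi b ->
  P.-integrable setT (fun x => (wf r b x)%:E).
Proof.
move=> hr hb.
have h := integrableB measurableT (integrableB measurableT (int_inner hr hb) (int_inner hr hpi))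
  (integrableB measurableT (int_inner hrhat hb) (int_inner hrhat hpi)).
suff -> : (fun x => (wf r b x)%:E) = (fun x =>
   ((inner (z b x) (r x))%:E - (inner (z pi x) (r x))%:E) -
   ((inner (z b x) (rhat x))%:E - (inner (z pi x) (rhat x))%:E)) by [].
apply/funext => x; rewrite /wf -!EFinB; congr (_%:E).
by rewrite (inner_decomp _ _ _ (rhat x)) [X in (X - _)%R]addrC addrK.
Qed.

Lemma J_decomp {r b} : reward_fun P Pi z mu rhat r -> Pi b ->
  J P (z b) r - J P (z pi) r =
  (J P (z b) rhat - J P (z pi) rhat) + \int[P]_x (wf r b x)%:E.
Proof.
move=> hr hb.
have hA := int_inner hr hb; have hB := int_inner hr hpi.
have hC := int_inner hrhat hb; have hD := int_inner hrhat hpi.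
rewrite /J -!integralB_EFin //.
have -> : (fun x => (wf r b x)%:E) = (fun x =>
   ((inner (z b x) (r x) - inner (z pi x) (r x))%:E -
   ((inner (z b x) (rhat x) - inner (z pi x) (rhat x)))%:E)).
  apply/funext => x; rewrite /wf -!EFinB; congr (_%:E).
  by rewrite (inner_decomp _ _ _ (rhat x)) [X in (X - _)%R]addrC addrK.
have iF : P.-integrable setT (EFin \o (fun x => inner (z b x) (r x) - inner (z pi x) (r x))%R).
  by rewrite /comp; under eq_fun do rewrite EFinB; exact: integrableB.
have iG : P.-integrable setT (EFin \o (fun x => inner (z b x) (rhat x) - inner (z pi x) (rhat x))%R).
  by rewrite /comp; under eq_fun do rewrite EFinB; exact: integrableB.
rewrite (integralB_EFin _ iF iG) // !integralB_EFin //.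
rewrite [RHS]addeC subeK //.
by rewrite fin_numB; apply/andP; split; exact: integrable_fin_num.
Qed.

Lemma Crel_ge0 b : 0 <= Crel P mu (z b) (z pi).
Proof.
rewrite /Crel; apply: ess_sup_gee.
  have h1 : (1 <= P [set: X])%E by rewrite probability_setT.
  exact: (lt_le_trans lte01 h1).
by apply: nearW => x; rewrite lee_fin norminfw_ge0 //; case: hmu.
Qed.

Lemma upper r b : U1 P Pi z mu rhat eps r -> Pi b ->
  J P (z b) r - J P (z pi) r <=
  (J P (z b) rhat - J P (z pi) rhat) + eps%:E * Crel P mu (z b) (z pi).
Proof.
move=> [hr hint] hb.
rewrite J_decomp //; apply: leeD2l.
have hC0 := Crel_ge0 b.
have mup : forall x y, (0 < mu x y)%R by case: hmu.
case Hc: (Crel P mu (z b) (z pi)) hC0 => [c| |] hC0; last first.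
- by [].
- by rewrite gt0_muley ?lte_fin // leey.
have c0 : (0 <= c)%R by rewrite -lee_fin.
have : Crel P mu (z b) (z pi) <= c%:E by rewrite Hc.
rewrite /Crel => /ess_supP hae.
have hn := hr.2.2.
have mn := measurable_int _ hn.
have mw := measurable_int _ (w_int hr hb).
apply: (le_trans (lee_abs _)); apply: (le_trans (le_abse_integral _ _ _)) => //.
have H : \int[P]_x `|(wf r b x)%:E| <= \int[P]_x (c * norm1w (mu x) (fun y => r x y - rhat x y))%R%:E.
  apply: ae_ge0_le_integral => //.
  - have := measurable_int _ (integrable_abse (w_int hr hb)).
    by [].
  - by move=> x _; rewrite lee_fin mulr_ge0 // norm1w_ge0.
  - apply/measurable_EFinP; apply: measurable_funM => //.
    exact/measurable_EFinP.
  apply: filterS hae => x hx _.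
  rewrite abse_EFin lee_fin.
  rewrite /wf; apply: (le_trans (inner_bound _ _ _ (mup x))).
  by apply: ler_wpM2r; [exact: norm1w_ge0 | rewrite -lee_fin].
apply: (le_trans H).
under eq_fun do rewrite EFinM.
rewrite ge0_integralZl_EFin //; last by move=> x _; rewrite lee_fin norm1w_ge0.
rewrite [X in _ <= X]muleC; apply: lee_wpmul2l => //; rewrite lee_fin.
Qed.

Lemma rhat_U1 : U1 P Pi z mu rhat eps rhat.
Proof.
split => //.
have -> : (fun x => (norm1w (mu x) (fun y => rhat x y - rhat x y))%:E) = cst 0.
  apply/funext => x; rewrite /norm1w big1 // => y _.
  by rewrite subrr normr0 mulr0.
by rewrite integral0 lee_fin ltW.
Qed.

Definition LHS := ereal_sup [set (ereal_sup [set J P (z b) r | b in Pi] - J P (z pi) r)%E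
              | r in U1 P Pi z mu rhat eps].

Lemma LHS_ge r b : U1 P Pi z mu rhat eps r -> Pi b ->
  J P (z b) r - J P (z pi) r <= LHS.
Proof.
move=> hr hb.
have h1 : J P (z b) r <= ereal_sup [set J P (z b) r | b in Pi].
  by apply: ereal_sup_ubound; exists b.
have h2 : ereal_sup [set J P (z b) r | b in Pi] - J P (z pi) r <= LHS.
  by apply: ereal_sup_ubound; exists r.
exact: le_trans (leeD2r _ h1) h2.
Qed.

Lemma int_indic_mul (A : set X) (t : R) : measurable A ->
  \int[P]_x (\1_A x * t)%R%:E = t%:E * P A.
Proof.
move=> mA.
under eq_fun do rewrite EFinM muleC.
rewrite integralZl //; last exact: integrable_indic.
by rewrite integral_indic // setIT.
Qed.

Lemma integrable_indic_mul (A : set X) (t : R) : measurable A ->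
  P.-integrable setT (fun x => (\1_A x * t)%R%:E).
Proof.
move=> mA.
under eq_fun do rewrite EFinM muleC.
apply: integrableZl => //; exact: integrable_indic.
Qed.

Definition Aset b c (y : Y) (s : bool) (n : nat) : set X :=
  [set x | ((c * mu x y < sgnb s * (z b x y - z pi x y)) && (n.+1%:R^-1 <= mu x y))%R].

Lemma mAset b c y s n : Pi b -> measurable (Aset b c y s n).
Proof.
move=> hb.
have mmu : measurable_fun setT (fun x => mu x y) by case: hmu => _ [_ h]; exact: h.
have mzb : measurable_fun setT (fun x => z b x y) by case: (hz _ hb) => _ h; exact: h.
have mzp : measurable_fun setT (fun x => z pi x y) by case: (hz _ hpi) => _ h; exact: h.
have mf : measurable_fun setT (fun x => ((c * mu x y < sgnb s * (z b x y - z pi x y)) && (n.+1%:R^-1 <= mu x y))%R).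
  apply: measurable_and.
    apply: measurable_fun_ltr.
      exact: (@measurable_funM _ _ _ _ (cst c) (fun x => mu x y) (measurable_cst _) mmu).
    apply: (@measurable_funM _ _ _ _ (cst (sgnb s)) (fun x => z b x y - z pi x y)%R (measurable_cst _)).
    exact: measurable_funB.
  by apply: measurable_fun_ler => //; exact: measurable_cst.
have := mf measurableT [set true] I.
by rewrite setTI.
Qed.

Lemma exists_A b c : Pi b -> (0 <= c)%R -> c%:E < Crel P mu (z b) (z pi) ->
  exists y s n, P (Aset b c y s n) <> 0.
Proof.
move=> hb c0 hc.
have mup : forall x y, (0 < mu x y)%R by case: hmu.
apply: contrapT => hno.
have h0 : forall y s n, P (Aset b c y s n) = 0.
  by move=> y s n; apply: contrapT => h; apply: hno; exists y, s, n.
move: hc; rewrite ltNge => /negP; apply; rewrite /Crel; apply/ess_supP.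
pose F n := \big[setU/set0]_(p : (Y * bool)%type) Aset b c p.1 p.2 n.
apply: (@negligibleS _ _ _ _ (\bigcup_n F n)); last first.
  apply: negligible_bigcup => n; rewrite /F.
  elim/big_ind: _ => //.
  - exact: negligible_set0.
  - by move=> A B; exact: negligibleU.
  by move=> [y s] _; exists (Aset b c y s n); split => //; [exact: mAset|exact: h0].
move=> x /= hx.
have [y hy] : exists y, ~ (`|z b x y - z pi x y| / mu x y <= c)%R.
  apply: contrapT => hall; apply: hx; rewrite lee_fin /norminfw.
  apply: bigmax_le => // y _.
  by apply: contrapT => h; apply: hall; exists y.
have hy' : (c * mu x y < `|z b x y - z pi x y|)%R.
  by rewrite -ltr_pdivlMr ?mup // ltNge; apply/negP.
have [n hn] := ltr_add_invr (mup x y); rewrite add0r in hn.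
exists n => //; rewrite /F.
rewrite (bigD1 (y, (0 <= z b x y - z pi x y)%R)) //=; left.
rewrite /Aset /= (ltW hn) andbT /sgnb.
case: ifP => h; first by rewrite mul1r -(ger0_norm h).
by rewrite mulN1r -ler0_norm // ltW // ltNge h.
Qed.

Lemma core b c : Pi b -> (0 <= c)%R -> c%:E < Crel P mu (z b) (z pi) ->
  (J P (z b) rhat - J P (z pi) rhat) + (eps * c)%:E <= LHS.
Proof.
move=> hb c0 hc.
have mup : forall x y, (0 < mu x y)%R by case: hmu.
have mmu : forall y, measurable_fun setT (fun x => mu x y).
  by case: hmu => _ [_ h]; exact: h.
have [y0 [s0 [n0 hA]]] := exists_A _ _ hb c0 hc.
set A0 := Aset b c y0 s0 n0 in hA.
have mA0 : measurable A0 by exact: (mAset _ _ _ _ _ hb).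
have PAfin : P A0 \is a fin_num by exact: fin_num_measure.
set a := fine (P A0).
have Pa : P A0 = a%:E by rewrite fineK.
have a0 : (0 < a)%R.
  rewrite -lte_fin -Pa lt0e measure_ge0 andbT; apply/eqP; exact: hA.
set k := (eps / a)%R.
have k0 : (0 < k)%R by rewrite divr_gt0.
have powE : forall x, (mu x y0 `^ (-1) = (mu x y0)^-1)%R.
  by move=> x; rewrite powRN powRr1 // ltW.
pose e x y := if y == y0 then (\1_A0 x * (sgnb s0 * k) * mu x y0 `^ (-1))%R else 0%R.
pose r x y := (rhat x y + e x y)%R.
have re : forall x, (fun y => r x y - rhat x y)%R = e x.
  by move=> x; apply/funext => y; rewrite /r addrC addKr.
have hnorm : forall x, norm1w (mu x) (e x) = (\1_A0 x * k)%R.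
  move=> x; rewrite /e norm1w_single powE indicE.
  case: (x \in A0); last by rewrite !mul0r normr0 mulr0.
  rewrite !mul1r !normrM.
  rewrite norm_sgnb.
  have ma : (0 < a^-1)%R by rewrite invr_gt0.
  have mm : (0 < (mu x y0)^-1)%R by rewrite invr_gt0.
  rewrite (gtr0_norm heps) (gtr0_norm ma) (gtr0_norm mm) /k.
  have := mup x y0; have := a0; move=> h1 h2.
  by field; rewrite ?gt_eqF.
have me : forall y, measurable_fun setT (fun x => e x y).
  move=> y; rewrite /e; case: (y == y0); last exact: measurable_cst.
  apply: (@measurable_funM _ _ _ _ (fun x => \1_A0 x * (sgnb s0 * k))%R (fun x => mu x y0 `^ (-1))%R).
    apply: (@measurable_funM _ _ _ _ (\1_A0) (cst (sgnb s0 * k))%R) => //.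
  exact: (measurableT_comp (measurable_powR _) (mmu y0)).
have ebound : forall x, (`|e x y0| <= k * n0.+1%:R)%R.
  move=> x; rewrite /e eqxx powE indicE.
  case hx: (x \in A0); last by rewrite !mul0r normr0 mulr_ge0 // ltW.
  rewrite mul1r !normrM.
  rewrite norm_sgnb.
  have mm : (0 < (mu x y0)^-1)%R by rewrite invr_gt0.
  have ma : (0 < a^-1)%R by rewrite invr_gt0.
  rewrite (gtr0_norm heps) (gtr0_norm ma) (gtr0_norm mm) mul1r.
  apply: ler_wpM2l; first exact: ltW.
  move/set_mem: hx; rewrite /A0 /Aset /= => /andP [_ hx].
  rewrite -(invrK (n0.+1%:R)) ler_pV2 ?inE ?unitfE ?invr_gt0 ?mup //.
  - by rewrite gt_eqF ?mup.
  - by rewrite invr_eq0 pnatr_eq0 /= ltr0Sn.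
have hr : U1 P Pi z mu rhat eps r.
  split; first split.
  - move=> y; rewrite /r.
    apply: (@measurable_funD _ _ _ _ (fun x => rhat x y) (fun x => e x y)) => //.
    by case: hrhat => h _; exact: h.
  - split.
    + move=> b' hb'.
      have -> : (fun x => (inner (z b' x) (r x))%:E) =
          (fun x => (inner (z b' x) (rhat x))%:E) \+ (fun x => (z b' x y0 * e x y0)%R%:E).
        apply/funext => x; rewrite /r inner_add /= -EFinD; congr (_ + _)%R%:E.
        rewrite /inner (bigD1 y0) //= big1 ?addr0 // => y /negbTE hy.
        by rewrite /e hy mulr0.
      apply: integrableD => //; first by case: hrhat => _ [h _]; exact: h.
      have [M hM] : exists M, forall x y, (`|z b' x y| <= M)%R by case: (hz _ hb').
      apply: (@le_integrable _ _ _ _ _ measurableT _ (EFin \o cst (M * (k * n0.+1%:R)))%R).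
      * apply/measurable_EFinP.
        apply: (@measurable_funM _ _ _ _ (fun x => z b' x y0) (fun x => e x y0)) => //.
        by case: (hz _ hb') => _ h; exact: h.
      * move=> x _.
        change ((`|(z b' x y0 * e x y0)|)%R%:E <= (`|M * (k * n0.+1%:R)|)%R%:E).
        rewrite lee_fin.
        apply: le_trans (ler_norm _); rewrite normrM.
        by apply: ler_pM => //.
      * exact: finite_measure_integrable_cst.
    + have -> : (fun x => (norm1w (mu x) (fun y => r x y - rhat x y))%:E) =
          (fun x => (\1_A0 x * k)%R%:E).
        by apply/funext => x; rewrite re hnorm.
      exact: integrable_indic_mul.
  have -> : (fun x => (norm1w (mu x) (fun y => r x y - rhat x y))%:E) =
      (fun x => (\1_A0 x * k)%R%:E).
    by apply/funext => x; rewrite re hnorm.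
  rewrite int_indic_mul // Pa -EFinM lee_fin /k divfK // gt_eqF //.
have := LHS_ge _ _ hr hb.
rewrite J_decomp //; last by case: hr.
apply: le_trans; apply: leeD2l.
have -> : (eps * c)%R%:E = \int[P]_x (\1_A0 x * (k * c))%R%:E.
  rewrite int_indic_mul // Pa -EFinM; congr (_%:E).
  by rewrite /k mulrAC divfK // gt_eqF.
apply: le_integral => //.
- exact: integrable_indic_mul.
- by apply: w_int => //; case: hr.
move=> x _; rewrite lee_fin /wf re /e inner_single powE indicE.
case hx: (x \in A0); last by rewrite !mul0r mulr0.
move/set_mem: hx; rewrite /A0 /Aset /= => /andP [hx _].
rewrite !mul1r.
have -> : ((z b x y0 - z pi x y0) * (sgnb s0 * k * (mu x y0)^-1) =
    k * ((sgnb s0 * (z b x y0 - z pi x y0)) / mu x y0))%R.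
  by rewrite /k; ring.
apply: ler_wpM2l; first exact: ltW.
by rewrite ler_pdivlMr ?mup // ltW.
Qed.

Lemma gluing (K Z L : \bar R) : K \is a fin_num ->
  (forall t : R, t%:E < Z -> K + t%:E <= L) -> K + Z <= L.
Proof.
move=> /fineK <-; set k := fine K => h.
case: Z h => [zz| |] h.
- case: L h => [l| |] h; last first.
  + have := h (zz - 1)%R; rewrite lte_fin gtrBl ltr01 => /(_ isT).
    by rewrite -EFinD leeNy_eq.
  + by rewrite leey.
  rewrite -EFinD lee_fin; apply/ler_addgt0Pr => e e0.
  have := h (zz - e)%R; rewrite lte_fin gtrBl e0 => /(_ isT).
  rewrite -EFinD lee_fin; exact: aux1.
- case: L h => [l| |] h; last first.
  + have := h 0%R; rewrite ltey => /(_ isT).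
    by rewrite -EFinD leeNy_eq.
  + by rewrite leey.
  have := h (l - k + 1)%R; rewrite ltey => /(_ isT).
  rewrite -EFinD lee_fin => H; exfalso; exact: aux2 H.
- by rewrite addeNy leNye.
Qed.

Lemma lower b : Pi b ->
  (J P (z b) rhat - J P (z pi) rhat) + eps%:E * Crel P mu (z b) (z pi) <= LHS.
Proof.
move=> hb; apply: gluing.
  by rewrite fin_numB; apply/andP; split; exact: J_fin.
move=> t ht.
have hK : J P (z b) rhat - J P (z pi) rhat <= LHS.
  exact: (LHS_ge _ _ rhat_U1 hb).
case: (ltP t 0%R) => t0.
  apply: le_trans hK.
  rewrite -[X in _ <= X]adde0; apply: leeD2l; rewrite lee_fin; exact: ltW.
have c0 : (0 <= t / eps)%R by rewrite divr_ge0 // ltW.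
have hc : (t / eps)%:E < Crel P mu (z b) (z pi).
  move: ht; case: (Crel P mu (z b) (z pi)) => [cc| |] //.
  - by rewrite -EFinM !lte_fin ltr_pdivrMr // mulrC.
  - by rewrite ltey.
  - by rewrite muleC gt0_mulNye ?lte_fin.
have := core b (t / eps)%R hb c0 hc.
by rewrite mulrC divfK // gt_eqF.
Qed.

Lemma main_sec :
  ereal_sup [set (ereal_sup [set J P (z b) r | b in Pi] - J P (z pi) r)%E
              | r in U1 P Pi z mu rhat eps]
   = ereal_sup [set (J P (z b) rhat - J P (z pi) rhat + eps%:E * Crel P mu (z b) (z pi))%E
              | b in Pi].
Proof.
apply/eqP; rewrite eq_le; apply/andP; split.
- apply: ge_ereal_sup => _ [r hr <-].
  have fin : J P (z pi) r \is a fin_num by apply: J_fin => //; case: hr.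
  rewrite leeBlDr //; apply: ge_ereal_sup => _ [b hb <-].
  rewrite -leeBlDr //; apply: le_trans (upper _ _ hr hb) _.
  by apply: ereal_sup_ubound; exists b.
- apply: ge_ereal_sup => _ [b hb <-].
  exact: lower.
Qed.

End main.

Theorem mainTheorem15 (d : measure_display) (X : measurableType d) (R : realType)
  (Y : finType) (P : probability X R) (Pol : Type) (Pi : set Pol)
  (z : Pol -> X -> Y -> R) (mu : X -> Y -> R) (rhat : X -> Y -> R) (eps : R) :
  Pi !=set0 ->
  (forall b, Pi b -> policy_rep (z b)) ->
  weight_family mu ->
  reward_fun P Pi z mu rhat rhat ->
  0 < eps ->
  forall pi, Pi pi ->
  (ereal_sup [set (ereal_sup [set J P (z b) r | b in Pi] - J P (z pi) r)%E
              | r in U1 P Pi z mu rhat eps]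
   = ereal_sup [set (J P (z b) rhat - J P (z pi) rhat + eps%:E * Crel P mu (z b) (z pi))%E
              | b in Pi])%E.
Proof.
move=> _ hz hmu hrhat heps pi hpi.
exact: (main_sec d X R Y P Pol Pi z mu rhat eps hz hmu hrhat heps pi hpi).
Qed.
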